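(* Let $\mathbb{E}$ be a finitely complete category endowed with a point-congruous class $\Sigma$ of split epimorphisms, and suppose $\mathbb{E}$ is $\Sigma$-protomodular. Then for every object $Z$, the full subcategory $\Sigma l_Z(\mathbb{E})$ of the slice $\mathbb{E}/Z$ whose objects are the $\Sigma$-special morphisms with codomain $Z$ is a protomodular category. In particular the full subcategory of $\mathbb{E}$ of $\Sigma$-special objects (the case $Z=1$) is protomodular.
   Context: A split epimorphism is a pair $(f,s)$ with $fs=1$. A class $\Sigma$ of split epimorphisms is fibrational if it contains all split epimorphisms $(f,s)$ with $f$ invertible and is stable under pullback along any morphism; it is point-congruous if moreover the full subcategory $\Sigma(\mathbb{E})$ of the category $\mathrm{Pt}(\mathbb{E})$ of split epimorphisms (with commuting squares as morphisms) is closed under finite limits in $\mathrm{Pt}(\mathbb{E})$. A pair of morphisms with common codomain $W$ is jointly extremally epic if it factors jointly through no non-invertible monomorphism into $W$. A split epimorphism $(f,s)\colon X\rightleftarrows Y$ is strongly split when for every morphism $y\colon\bar Y\to Y$, with $x\colon\bar Y\times_YX\to X$ the pullback projection, the pair $(x,s)$ is jointly extremally epic; $\mathbb{E}$ is $\Sigma$-protomodular when every split epimorphism in $\Sigma$ is strongly split. A $\Sigma$-relation is a reflexive relation $(d_0,d_1)\colon S\rightarrowtail X\times X$ with reflexivity $s_0$ such that $(d_0,s_0)\in\Sigma$; a morphism $f$ is $\Sigma$-special when its kernel relation $R[f]$ is a $\Sigma$-relation, and an object is $\Sigma$-special when its morphism to the terminal object $1$ is. A category is protomodular when base-change functors along any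 morphism with respect to its fibration of points (pullback of split epimorphisms) are conservative, equivalently when every split epimorphism is strongly split. *)

(* Defs.v *)
From Stdlib Require Import ProofIrrelevance.

Set Implicit Arguments.
Unset Strict Implicit.

Record Category := {
  Obj :> Type;
  Hom : Obj -> Obj -> Type;
  idm : forall a, Hom a a;
  comp : forall a b c, Hom b c -> Hom a b -> Hom a c;
  comp_id_l : forall a b (f : Hom a b), comp (idm b) f = f;
  comp_id_r : forall a b (f : Hom a b), comp f (idm a) = f;
  comp_assoc : forall a b c d (h : Hom c d) (g : Hom b c) (f : Hom a b),
      comp h (comp g f) = comp (comp h g) f
}.
Arguments Hom {C} a b : rename.
Arguments idm {C} a : rename.
Arguments comp {C} {a b c} g f : rename.
Arguments comp_id_l {C} {a b} f : rename.
Arguments comp_id_r {C} {a b} f : rename.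
Arguments comp_assoc {C} {a b c d} h g f : rename.

Notation "g ∘ f" := (comp g f) (at level 40, left associativity).

Section Basics.
Context {C : Category}.

Definition is_iso {a b : C} (f : Hom a b) : Prop :=
  exists g : Hom b a, g ∘ f = idm a /\ f ∘ g = idm b.

Definition is_mono {m w : C} (f : Hom m w) : Prop :=
  forall (t : C) (u v : Hom t m), f ∘ u = f ∘ v -> u = v.

Definition is_terminal (t : C) : Prop :=
  forall x : C, exists f : Hom x t, forall g : Hom x t, g = f.

Definition is_pullback {a b c p : C} (f : Hom a c) (g : Hom b c)
    (p1 : Hom p a) (p2 : Hom p b) : Prop :=
  f ∘ p1 = g ∘ p2 /\
  forall (q : C) (q1 : Hom q a) (q2 : Hom q b), f ∘ q1 = g ∘ q2 ->
    exists u : Hom q p, p1 ∘ u = q1 /\ p2 ∘ u = q2 /\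
      forall u' : Hom q p, p1 ∘ u' = q1 -> p2 ∘ u' = q2 -> u' = u.

Definition has_pullbacks : Prop :=
  forall (a b c : C) (f : Hom a c) (g : Hom b c),
    exists (p : C) (p1 : Hom p a) (p2 : Hom p b), is_pullback f g p1 p2.

Definition finitely_complete : Prop :=
  (exists t : C, is_terminal t) /\ has_pullbacks.

Definition jointly_extremally_epic {a b w : C} (u : Hom a w) (v : Hom b w) : Prop :=
  forall (m : C) (i : Hom m w) (u' : Hom a m) (v' : Hom b m),
    is_mono i -> i ∘ u' = u -> i ∘ v' = v -> is_iso i.

Definition strongly_split {x y : C} (f : Hom x y) (s : Hom y x) : Prop :=
  forall (yb : C) (yy : Hom yb y) (p : C) (xx : Hom p x) (fb : Hom p yb),
    is_pullback f yy xx fb -> jointly_extremally_epic xx s.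

(* protomodularity: pullbacks of split epis along any map exist (so that the
   fibration of points is defined), and every split epimorphism is strongly split *)
Definition protomodular : Prop :=
  (forall (x y : C) (f : Hom x y) (s : Hom y x) (yb : C) (yy : Hom yb y),
      f ∘ s = idm y -> exists (p : C) (xx : Hom p x) (fb : Hom p yb),
        is_pullback f yy xx fb) /\
  (forall (x y : C) (f : Hom x y) (s : Hom y x), f ∘ s = idm y -> strongly_split f s).

End Basics.
Arguments protomodular C : clear implicits.
Arguments finitely_complete C : clear implicits.

Definition FullSub (C : Category) (P : C -> Prop) : Category :=
  {| Obj := {x : C | P x};
     Hom := fun a b => Hom (proj1_sig a) (proj1_sig b);
     idm := fun a => idm (proj1_sig a);
     comp := fun a b c g f => g ∘ f;
     comp_id_l := fun a b f => comp_id_l f;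
     comp_id_r := fun a b f => comp_id_r f;
     comp_assoc := fun a b c d h g f => comp_assoc h g f |}.

Section Slice.
Variables (C : Category) (Z : C).
Definition SObj := {x : C & Hom x Z}.
Definition SHom (a b : SObj) := {h : Hom (projT1 a) (projT1 b) | projT2 b ∘ h = projT2 a}.
Definition Sid (a : SObj) : SHom a a.
Proof. exists (idm _). apply comp_id_r. Defined.
Definition Scomp (a b c : SObj) (g : SHom b c) (f : SHom a b) : SHom a c.
Proof.
  exists (proj1_sig g ∘ proj1_sig f).
  rewrite comp_assoc, (proj2_sig g). exact (proj2_sig f).
Defined.
Lemma SHom_eq (a b : SObj) (g h : SHom a b) : proj1_sig g = proj1_sig h -> g = h.
Proof.
  destruct g, h; simpl; intros ->; f_equal; apply proof_irrelevance.
Qed.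
Definition Slice : Category.
Proof.
  refine {| Obj := SObj; Hom := SHom; idm := Sid; comp := Scomp |};
  intros; apply SHom_eq; simpl.
  - apply comp_id_l. - apply comp_id_r. - apply comp_assoc.
Defined.
End Slice.

Section Points.
Variable (C : Category).
Record PtObj := {
  ptX : C; ptY : C; ptf : Hom ptX ptY; pts : Hom ptY ptX;
  ptfs : ptf ∘ pts = idm ptY }.
Record PtHom (a b : PtObj) := {
  ptu : Hom (ptX a) (ptX b); ptv : Hom (ptY a) (ptY b);
  pt_eqf : ptf b ∘ ptu = ptv ∘ ptf a;
  pt_eqs : ptu ∘ pts a = pts b ∘ ptv }.
Lemma PtHom_eq (a b : PtObj) (g h : PtHom a b) :
  ptu g = ptu h -> ptv g = ptv h -> g = h.
Proof.
  destruct g, h; simpl; intros -> ->; f_equal; apply proof_irrelevance.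
Qed.
Definition Ptid (a : PtObj) : PtHom a a.
Proof.
  refine {| ptu := idm _; ptv := idm _ |};
  rewrite comp_id_l, comp_id_r; reflexivity.
Defined.
Definition Ptcomp (a b c : PtObj) (g : PtHom b c) (f : PtHom a b) : PtHom a c.
Proof.
  refine {| ptu := ptu g ∘ ptu f; ptv := ptv g ∘ ptv f |}.
  - rewrite comp_assoc, (pt_eqf g), <- comp_assoc, (pt_eqf f), comp_assoc; reflexivity.
  - rewrite <- comp_assoc, (pt_eqs f), comp_assoc, (pt_eqs g), comp_assoc; reflexivity.
Defined.
Definition Pt : Category.
Proof.
  refine {| Obj := PtObj; Hom := PtHom; idm := Ptid; comp := Ptcomp |};
  intros; apply PtHom_eq; simpl; (apply comp_id_l || apply comp_id_r || apply comp_assoc).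
Defined.
End Points.

Definition SplitClass (C : Category) :=
  forall x y : C, Hom x y -> Hom y x -> Prop.

Section Sigma.
Variables (C : Category) (Sigma : SplitClass C).

Definition split_epi_class : Prop :=
  forall (x y : C) (f : Hom x y) (s : Hom y x), Sigma f s -> f ∘ s = idm y.

Definition fibrational : Prop :=
  (forall (x y : C) (f : Hom x y) (s : Hom y x),
      f ∘ s = idm y -> is_iso f -> Sigma f s) /\
  (forall (x y : C) (f : Hom x y) (s : Hom y x) (yb : C) (yy : Hom yb y)
          (p : C) (xx : Hom p x) (fb : Hom p yb) (sb : Hom yb p),
      Sigma f s -> is_pullback f yy xx fb ->
      fb ∘ sb = idm yb -> xx ∘ sb = s ∘ yy -> Sigma fb sb).

Definition inSigma (a : Pt C) : Prop := Sigma (ptf a) (pts a).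

(* Sigma(E) closed under finite limits in Pt(E): under the terminal object
   and under pullbacks (which generate all finite limits). *)
Definition point_congruous : Prop :=
  fibrational /\
  (forall t : Pt C, is_terminal t -> inSigma t) /\
  (forall (a b c p : Pt C) (f : Hom a c) (g : Hom b c) (p1 : Hom p a) (p2 : Hom p b),
      is_pullback f g p1 p2 -> inSigma a -> inSigma b -> inSigma c -> inSigma p).

Definition sigma_protomodular : Prop :=
  forall (x y : C) (f : Hom x y) (s : Hom y x), Sigma f s -> strongly_split f s.

(* (d0,d1) : S -> X x X with reflexivity s0 is a Sigma-relation when (d0,s0) in Sigma;
   f is Sigma-special when its kernel relation R[f] (kernel pair with diagonal) is. *)
Definition sigma_special {x z : C} (f : Hom x z) : Prop :=
  forall (r : C) (d0 d1 : Hom r x) (s0 : Hom x r),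
    is_pullback f f d0 d1 -> d0 ∘ s0 = idm x -> d1 ∘ s0 = idm x -> Sigma d0 s0.

Definition sigma_special_object (x : C) : Prop :=
  forall (t : C), is_terminal t -> forall f : Hom x t, sigma_special f.

Definition SigmaSpecialSlice (Z : C) : Category :=
  @FullSub (@Slice C Z) (fun a => sigma_special (projT2 a)).

Definition SigmaSpecialObjects : Category :=
  @FullSub C sigma_special_object.
End Sigma.

(* Main.v *)
Require Import Defs.
From Stdlib Require Import ProofIrrelevance ClassicalEpsilon.

Section Helpers.
Context {C : Category}.

Lemma pb_comm {a b c p : C} {f : Hom a c} {g : Hom b c} {p1 : Hom p a} {p2 : Hom p b} :
  is_pullback f g p1 p2 -> f ∘ p1 = g ∘ p2.
Proof. intros [H _]; exact H. Qed.

Lemma pb_ex {a b c p : C} {f : Hom a c} {g : Hom b c} {p1 : Hom p a} {p2 : Hom p b} :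
  is_pullback f g p1 p2 -> forall (q : C) (q1 : Hom q a) (q2 : Hom q b), f ∘ q1 = g ∘ q2 ->
  exists u : Hom q p, p1 ∘ u = q1 /\ p2 ∘ u = q2.
Proof. intros [_ H] q q1 q2 E. destruct (H q q1 q2 E) as [u [H1 [H2 _]]]. eauto. Qed.

Lemma pb_uniq {a b c p : C} {f : Hom a c} {g : Hom b c} {p1 : Hom p a} {p2 : Hom p b} :
  is_pullback f g p1 p2 -> forall (q : C) (u v : Hom q p),
  p1 ∘ u = p1 ∘ v -> p2 ∘ u = p2 ∘ v -> u = v.
Proof.
  intros [Hc H] q u v H1 H2.
  destruct (H q (p1 ∘ u) (p2 ∘ u)) as [w [_ [_ Hw]]].
  { rewrite !comp_assoc, Hc. reflexivity. }
  rewrite (Hw u eq_refl eq_refl). symmetry; apply Hw; auto.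
Qed.

Lemma kp_ex : @has_pullbacks C -> forall {x z : C} (h : Hom x z),
  exists (r : C) (d0 d1 : Hom r x) (s0 : Hom x r),
    is_pullback h h d0 d1 /\ d0 ∘ s0 = idm x /\ d1 ∘ s0 = idm x.
Proof.
  intros HP x z h. destruct (HP _ _ _ h h) as [r [d0 [d1 Hpb]]].
  destruct (pb_ex Hpb x (idm x) (idm x) eq_refl) as [s0 [H1 H2]].
  exists r, d0, d1, s0; auto.
Qed.

Lemma cancel_r {a b c d : C} (x : Hom c d) (f : Hom b c) (s : Hom a b) (g : Hom b d):
  x ∘ f = g -> x ∘ (f ∘ s) = g ∘ s.
Proof. intros <-; apply comp_assoc. Qed.

End Helpers.
Set Implicit Arguments.

Section Core.
Variable E : Category.
Variable Sigma : forall x y : E, Hom x y -> Hom y x -> Prop.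
Arguments Sigma {x y}.
Hypothesis HP : @has_pullbacks E.
Hypothesis Hfib : fibrational (@Sigma).
Hypothesis Hpt : forall (a b c p : Pt E) (f : Hom a c) (g : Hom b c) (p1 : Hom p a) (p2 : Hom p b),
      is_pullback f g p1 p2 -> inSigma (@Sigma) a -> inSigma (@Sigma) b -> inSigma (@Sigma) c -> inSigma (@Sigma) p.

Lemma Sigma_id (y : E) : Sigma (idm y) (idm y).
Proof.
  apply (proj1 Hfib). apply comp_id_l. exists (idm y). split; apply comp_id_l.
Qed.

Lemma LA (X Y Z : E) (h : Hom X Z) (k : Hom Y Z) (f : Hom X Y) (s : Hom Y X) :
  sigma_special (@Sigma) h -> sigma_special (@Sigma) k -> f ∘ s = idm Y -> k ∘ f = h ->
  Sigma f s.
Proof.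
  intros Sh Sk Hfs Hkf.
  assert (Hhs : h ∘ s = k) by (rewrite <- Hkf, <- comp_assoc, Hfs; apply comp_id_r).
  destruct (kp_ex HP h) as [R [r0 [r1 [dl [HR [Hr0 Hr1]]]]]].
  destruct (kp_ex HP k) as [S [t0 [t1 [ep [HS [Ht0 Ht1]]]]]].
  destruct (HP _ _ _ r0 s) as [PA [xa [fa HA]]].
  destruct (pb_ex HA Y (dl ∘ s) (idm Y)) as [sa [Hsa1 Hsa2]].
  { rewrite comp_assoc, Hr0, comp_id_l, comp_id_r. reflexivity. }
  assert (SA : Sigma fa sa).
  { apply (proj2 Hfib) with (f := r0) (s := dl) (yy := s) (xx := xa); auto.
    exact (Sh _ _ _ _ HR Hr0 Hr1). }
  assert (Hal : k ∘ fa = k ∘ (f ∘ (r1 ∘ xa))).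
  { rewrite comp_assoc, Hkf, comp_assoc, <- (pb_comm HR), <- comp_assoc, (pb_comm HA),
      comp_assoc, Hhs. reflexivity. }
  destruct (pb_ex HS PA fa (f ∘ (r1 ∘ xa)) Hal) as [ua [Hua0 Hua1]].
  destruct (pb_ex HR X (s ∘ f) (idm X)) as [rho [Hrho0 Hrho1]].
  { rewrite comp_assoc, Hhs, Hkf, comp_id_r. reflexivity. }
  destruct (pb_ex HA X rho f) as [io [Hio1 Hio2]].
  { rewrite Hrho0. reflexivity. }
  set (A := {| ptX := PA; ptY := Y; ptf := fa; pts := sa; ptfs := Hsa2 |}).
  set (B := {| ptX := S; ptY := Y; ptf := t0; pts := ep; ptfs := Ht0 |}).
  set (Cp := {| ptX := Y; ptY := Y; ptf := idm Y; pts := idm Y; ptfs := comp_id_l (idm Y) |}).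
  set (P0 := {| ptX := X; ptY := Y; ptf := f; pts := s; ptfs := Hfs |}).
  assert (al_f : t0 ∘ ua = idm Y ∘ fa) by (rewrite Hua0, comp_id_l; reflexivity).
  assert (al_s : ua ∘ sa = ep ∘ idm Y).
  { apply (pb_uniq HS).
    - rewrite comp_assoc, Hua0, Hsa2, comp_id_r, Ht0. reflexivity.
    - rewrite comp_assoc, Hua1, comp_id_r, Ht1, <- !comp_assoc, Hsa1.
      rewrite (comp_assoc r1 dl s), Hr1, comp_id_l. exact Hfs. }
  set (al := @Build_PtHom E A B ua (idm Y) al_f al_s : Hom (C := Pt E) A B).
  assert (be_f : t0 ∘ ep = idm Y ∘ idm Y) by (rewrite Ht0, comp_id_l; reflexivity).
  assert (be_s : ep ∘ idm Y = ep ∘ idm Y) by reflexivity.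
  set (be := @Build_PtHom E Cp B ep (idm Y) be_f be_s : Hom (C := Pt E) Cp B).
  assert (p1_f : fa ∘ io = idm Y ∘ f) by (rewrite Hio2, comp_id_l; reflexivity).
  assert (p1_s : io ∘ s = sa ∘ idm Y).
  { rewrite comp_id_r. apply (pb_uniq HA).
    - rewrite comp_assoc, Hio1, Hsa1. apply (pb_uniq HR).
      + rewrite !comp_assoc, Hrho0, Hr0, comp_id_l, <- comp_assoc, Hfs, comp_id_r.
        reflexivity.
      + rewrite !comp_assoc, Hrho1, Hr1. reflexivity.
    - rewrite comp_assoc, Hio2, Hsa2. exact Hfs. }
  set (pi1 := @Build_PtHom E P0 A io (idm Y) p1_f p1_s : Hom (C := Pt E) P0 A).
  assert (p2_f : idm Y ∘ f = idm Y ∘ f) by reflexivity.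
  assert (p2_s : f ∘ s = idm Y ∘ idm Y) by (rewrite Hfs, comp_id_l; reflexivity).
  set (pi2 := @Build_PtHom E P0 Cp f (idm Y) p2_f p2_s : Hom (C := Pt E) P0 Cp).
  assert (Hpb : is_pullback al be pi1 pi2).
  { split.
    - apply PtHom_eq; simpl.
      + apply (pb_uniq HS).
        * rewrite !comp_assoc, Hua0, Ht0, comp_id_l. exact Hio2.
        * rewrite !comp_assoc, Hua1, Ht1, comp_id_l, <- !comp_assoc, Hio1, Hrho1, comp_id_r.
          reflexivity.
      + reflexivity.
    - intros q q1 q2 Hq.
      assert (Hu := f_equal (@ptu E _ _) Hq). assert (Hv := f_equal (@ptv E _ _) Hq).
      simpl in Hu, Hv. rewrite !comp_id_l in Hv.
      assert (Hfu : f ∘ (r1 ∘ (xa ∘ ptu q1)) = ptu q2).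
      { rewrite (comp_assoc r1 xa (ptu q1)), (comp_assoc f (r1 ∘ xa)), <- Hua1, <- comp_assoc, Hu, comp_assoc, Ht1. apply comp_id_l. }
      assert (Hfa : fa ∘ ptu q1 = ptu q2).
      { rewrite <- Hua0, <- comp_assoc, Hu, comp_assoc, Ht0. apply comp_id_l. }
      assert (m_f : f ∘ (r1 ∘ (xa ∘ ptu q1)) = ptv q1 ∘ ptf q).
      { rewrite Hfu, Hv. exact (eq_trans (eq_sym (comp_id_l _)) (pt_eqf q2)). }
      assert (m_s : (r1 ∘ (xa ∘ ptu q1)) ∘ pts q = s ∘ ptv q1).
      { assert (Hs1 : ptu q1 ∘ pts q = sa ∘ ptv q1) by exact (pt_eqs q1).
        change (ptX A) with PA in Hs1. change (pts A) with sa in Hs1.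
        rewrite <- !comp_assoc, Hs1.
        rewrite (comp_assoc xa sa), Hsa1, !comp_assoc, Hr1, comp_id_l. reflexivity. }
      exists (@Build_PtHom E q P0 (r1 ∘ (xa ∘ ptu q1)) (ptv q1) m_f m_s).
      split; [|split].
      + apply PtHom_eq; simpl; [|apply comp_id_l].
        apply (pb_uniq HA).
        * rewrite comp_assoc, Hio1. apply (pb_uniq HR).
          -- rewrite (comp_assoc r0 rho), Hrho0, <- (comp_assoc s f), Hfu.
             rewrite (comp_assoc r0 xa), (pb_comm HA), <- comp_assoc, Hfa. reflexivity.
          -- rewrite (comp_assoc r1 rho), Hrho1, comp_id_l. reflexivity.
        * rewrite comp_assoc, Hio2, Hfu, Hfa. reflexivity.
      + apply PtHom_eq; simpl; [exact Hfu|rewrite comp_id_l; exact Hv].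
      + intros u' H1 H2.
        assert (Hu1 := f_equal (@ptu E _ _) H1). assert (Hv1 := f_equal (@ptv E _ _) H1).
        simpl in Hu1, Hv1.
        apply PtHom_eq; simpl.
        * rewrite <- Hu1, (comp_assoc xa io), Hio1, (comp_assoc r1 rho), Hrho1, comp_id_l. reflexivity.
        * rewrite <- Hv1, comp_id_l. reflexivity. }
  exact (Hpt Hpb SA (Sigma_id Y) (Sk _ _ _ _ HS Ht0 Ht1)).
Qed.

Lemma kp_map {X W Z1 Z2 : E} (hX : Hom X Z1) (hW : Hom W Z2) (g : Hom X W)
  {RX RW : E} {x0 x1 : Hom RX X} {w0 w1 : Hom RW W} :
  is_pullback hX hX x0 x1 -> is_pullback hW hW w0 w1 ->
  (exists c : Hom Z1 Z2, hW ∘ g = c ∘ hX) ->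
  exists u : Hom RX RW, w0 ∘ u = g ∘ x0 /\ w1 ∘ u = g ∘ x1.
Proof.
  intros HX HW [c Hc]. apply (pb_ex HW).
  rewrite !comp_assoc, Hc, <- !comp_assoc, (pb_comm HX). reflexivity.
Qed.


Lemma LP (X Y W P Z : E) (hX : Hom X Z) (hY : Hom Y Z) (hW : Hom W Z)
  (g1 : Hom X W) (g2 : Hom Y W) (p1 : Hom P X) (p2 : Hom P Y) (hP : Hom P Z) :
  sigma_special (@Sigma) hX -> sigma_special (@Sigma) hY -> sigma_special (@Sigma) hW ->
  hW ∘ g1 = hX -> hW ∘ g2 = hY -> is_pullback g1 g2 p1 p2 -> hP = hX ∘ p1 ->
  sigma_special (@Sigma) hP.
Proof.
  intros SX SY SW Hg1 Hg2 HPB HhP r d0 d1 s0 Hr Hd0 Hd1.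
  assert (HhP2 : hP = hY ∘ p2).
  { rewrite HhP, <- Hg1, <- Hg2, <- !comp_assoc, (pb_comm HPB). reflexivity. }
  destruct (kp_ex HP hX) as [RX [x0 [x1 [dx [HX [Hx0 Hx1]]]]]].
  destruct (kp_ex HP hY) as [RY [y0 [y1 [dy [HY [Hy0 Hy1]]]]]].
  destruct (kp_ex HP hW) as [RW [w0 [w1 [dw [HW [Hw0 Hw1]]]]]].
  destruct (kp_map g1 HX HW) as [k1 [Hk10 Hk11]].
  { exists (idm Z). rewrite comp_id_l. exact Hg1. }
  destruct (kp_map g2 HY HW) as [k2 [Hk20 Hk21]].
  { exists (idm Z). rewrite comp_id_l. exact Hg2. }
  destruct (kp_map p1 Hr HX) as [m1 [Hm10 Hm11]].
  { exists (idm Z). rewrite comp_id_l. symmetry. exact HhP. }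
  destruct (kp_map p2 Hr HY) as [m2 [Hm20 Hm21]].
  { exists (idm Z). rewrite comp_id_l. symmetry. exact HhP2. }
  set (a := {| ptX := RX; ptY := X; ptf := x0; pts := dx; ptfs := Hx0 |}).
  set (b := {| ptX := RY; ptY := Y; ptf := y0; pts := dy; ptfs := Hy0 |}).
  set (c := {| ptX := RW; ptY := W; ptf := w0; pts := dw; ptfs := Hw0 |}).
  set (p := {| ptX := r; ptY := P; ptf := d0; pts := s0; ptfs := Hd0 |}).
  assert (Ediag : forall (Q X0 W0 Z0 : E) (hW0 : Hom W0 Z0) (R0 : E) (e0 e1 : Hom R0 W0) (de : Hom W0 R0)
     (u : Hom Q R0) (k0 k1 : Hom Q X0) (dk : Hom X0 Q) (g : Hom X0 W0),
     is_pullback hW0 hW0 e0 e1 -> e0 ∘ de = idm W0 -> e1 ∘ de = idm W0 ->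
     e0 ∘ u = g ∘ k0 -> e1 ∘ u = g ∘ k1 -> k0 ∘ dk = idm X0 -> k1 ∘ dk = idm X0 ->
     u ∘ dk = de ∘ g).
  { intros Q X0 W0 Z0 hW0 R0 e0 e1 de u kk0 kk1 dk g H He0 He1 Hu0 Hu1 Hk0 Hk1.
    apply (pb_uniq H).
    - rewrite !comp_assoc, Hu0, He0, <- comp_assoc, Hk0, comp_id_l, comp_id_r. reflexivity.
    - rewrite !comp_assoc, Hu1, He1, <- comp_assoc, Hk1, comp_id_l, comp_id_r. reflexivity. }
  assert (k1f : w0 ∘ k1 = g1 ∘ x0) by exact Hk10.
  assert (k1s : k1 ∘ dx = dw ∘ g1) by (eapply Ediag; eauto).
  set (K1 := @Build_PtHom E a c k1 g1 k1f k1s : Hom (C := Pt E) a c).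
  assert (k2f : w0 ∘ k2 = g2 ∘ y0) by exact Hk20.
  assert (k2s : k2 ∘ dy = dw ∘ g2) by (eapply Ediag; eauto).
  set (K2 := @Build_PtHom E b c k2 g2 k2f k2s : Hom (C := Pt E) b c).
  assert (m1f : x0 ∘ m1 = p1 ∘ d0) by exact Hm10.
  assert (m1s : m1 ∘ s0 = dx ∘ p1) by (eapply Ediag; eauto).
  set (M1 := @Build_PtHom E p a m1 p1 m1f m1s : Hom (C := Pt E) p a).
  assert (m2f : y0 ∘ m2 = p2 ∘ d0) by exact Hm20.
  assert (m2s : m2 ∘ s0 = dy ∘ p2) by (eapply Ediag; eauto).
  set (M2 := @Build_PtHom E p b m2 p2 m2f m2s : Hom (C := Pt E) p b).
  assert (Hpb : is_pullback K1 K2 M1 M2).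
  { split.
    - apply PtHom_eq; simpl; [|exact (pb_comm HPB)].
      apply (pb_uniq HW).
      + rewrite !comp_assoc, Hk10, Hk20, <- !comp_assoc, Hm10, Hm20, !comp_assoc, (pb_comm HPB).
        reflexivity.
      + rewrite !comp_assoc, Hk11, Hk21, <- !comp_assoc, Hm11, Hm21, !comp_assoc, (pb_comm HPB).
        reflexivity.
    - intros q q1 q2 Hq.
      assert (Hu : k1 ∘ ptu q1 = k2 ∘ ptu q2) by exact (f_equal (@ptu E _ _) Hq).
      assert (Hv : g1 ∘ ptv q1 = g2 ∘ ptv q2) by exact (f_equal (@ptv E _ _) Hq).
      assert (Hq1f : x0 ∘ ptu q1 = ptv q1 ∘ ptf q) by exact (pt_eqf q1).
      assert (Hq1s : ptu q1 ∘ pts q = dx ∘ ptv q1) by exact (pt_eqs q1).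
      assert (Hq2f : y0 ∘ ptu q2 = ptv q2 ∘ ptf q) by exact (pt_eqf q2).
      assert (Hq2s : ptu q2 ∘ pts q = dy ∘ ptv q2) by exact (pt_eqs q2).
      change (ptX a) with RX in *. change (ptY a) with X in *.
      change (ptX b) with RY in *. change (ptY b) with Y in *.
      destruct (pb_ex HPB _ _ _ Hv) as [v [Hv1 Hv2]].
      destruct (pb_ex HPB _ (x0 ∘ ptu q1) (y0 ∘ ptu q2)) as [e0 [He01 He02]].
      { rewrite !comp_assoc, <- Hk10, <- Hk20, <- !comp_assoc, Hu. reflexivity. }
      destruct (pb_ex HPB _ (x1 ∘ ptu q1) (y1 ∘ ptu q2)) as [e1 [He11 He12]].
      { rewrite !comp_assoc, <- Hk11, <- Hk21, <- !comp_assoc, Hu. reflexivity. }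
      destruct (pb_ex Hr _ e0 e1) as [u [Hu0 Hu1]].
      { rewrite HhP, <- !comp_assoc, He01, He11, !comp_assoc, (pb_comm HX). reflexivity. }
      assert (mf : d0 ∘ u = v ∘ ptf q).
      { rewrite Hu0. apply (pb_uniq HPB).
        - rewrite He01, comp_assoc, Hv1. exact Hq1f.
        - rewrite He02, comp_assoc, Hv2. exact Hq2f. }
      assert (ms : u ∘ pts q = s0 ∘ v).
      { apply (pb_uniq Hr).
        - rewrite !comp_assoc, Hu0, Hd0, comp_id_l. apply (pb_uniq HPB).
          + rewrite comp_assoc, He01, <- comp_assoc, Hq1s, comp_assoc, Hx0, comp_id_l. symmetry; exact Hv1.
          + rewrite comp_assoc, He02, <- comp_assoc, Hq2s, comp_assoc, Hy0, comp_id_l. symmetry; exact Hv2.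
        - rewrite !comp_assoc, Hu1, Hd1, comp_id_l. apply (pb_uniq HPB).
          + rewrite comp_assoc, He11, <- comp_assoc, Hq1s, comp_assoc, Hx1, comp_id_l. symmetry; exact Hv1.
          + rewrite comp_assoc, He12, <- comp_assoc, Hq2s, comp_assoc, Hy1, comp_id_l. symmetry; exact Hv2. }
      exists (@Build_PtHom E q p u v mf ms).
      split; [|split].
      + apply PtHom_eq; simpl; [|exact Hv1].
        apply (pb_uniq HX).
        * rewrite comp_assoc, Hm10, <- comp_assoc, Hu0. exact He01.
        * rewrite comp_assoc, Hm11, <- comp_assoc, Hu1. exact He11.
      + apply PtHom_eq; simpl; [|exact Hv2].
        apply (pb_uniq HY).
        * rewrite comp_assoc, Hm20, <- comp_assoc, Hu0. exact He02.
        * rewrite comp_assoc, Hm21, <- comp_assoc, Hu1. exact He12.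
      + intros u' H1 H2.
        assert (Hu1' : m1 ∘ ptu u' = ptu q1) by exact (f_equal (@ptu E _ _) H1).
        assert (Hv1' : p1 ∘ ptv u' = ptv q1) by exact (f_equal (@ptv E _ _) H1).
        assert (Hu2' : m2 ∘ ptu u' = ptu q2) by exact (f_equal (@ptu E _ _) H2).
        assert (Hv2' : p2 ∘ ptv u' = ptv q2) by exact (f_equal (@ptv E _ _) H2).
        apply PtHom_eq; simpl.
        * apply (pb_uniq Hr).
          -- rewrite Hu0. apply (pb_uniq HPB).
             ++ rewrite He01, <- Hu1', !comp_assoc, Hm10. reflexivity.
             ++ rewrite He02, <- Hu2', !comp_assoc, Hm20. reflexivity.
          -- rewrite Hu1. apply (pb_uniq HPB).
             ++ rewrite He11, <- Hu1', !comp_assoc, Hm11. reflexivity.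
             ++ rewrite He12, <- Hu2', !comp_assoc, Hm21. reflexivity.
        * apply (pb_uniq HPB); [rewrite Hv1' | rewrite Hv2']; symmetry; assumption. }
  exact (Hpt Hpb (SX _ _ _ _ HX Hx0 Hx1) (SY _ _ _ _ HY Hy0 Hy1) (SW _ _ _ _ HW Hw0 Hw1)).
Qed.
End Core.

Section Abstract.
Variable E : Category.
Variable Sigma : forall x y : E, Hom x y -> Hom y x -> Prop.
Arguments Sigma {x y}.
Hypothesis HP : @has_pullbacks E.
Hypothesis Hfib : fibrational (@Sigma).
Hypothesis Hpt : forall (a b c p : Pt E) (f : Hom a c) (g : Hom b c) (p1 : Hom p a) (p2 : Hom p b),
      is_pullback f g p1 p2 -> inSigma (@Sigma) a -> inSigma (@Sigma) b -> inSigma (@Sigma) c -> inSigma (@Sigma) p.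
Hypothesis Hpm : sigma_protomodular (@Sigma).

Record Forget (D : Category) (Z : E) := {
  U : D -> E;
  hZ : forall a : D, Hom (U a) Z;
  Uh : forall a b : D, Hom a b -> Hom (U a) (U b);
  Uh_comp : forall (a b c : D) (g : Hom b c) (f : Hom a b), Uh _ _ (g ∘ f) = Uh _ _ g ∘ Uh _ _ f;
  Uh_id : forall a : D, Uh _ _ (idm a) = idm (U a);
  Uh_inj : forall (a b : D) (f g : Hom a b), Uh _ _ f = Uh _ _ g -> f = g;
  Uh_hZ : forall (a b : D) (g : Hom a b), hZ b ∘ Uh _ _ g = hZ a;
  hZ_spec : forall a, sigma_special (@Sigma) (hZ a);
  lift_hom : forall (a b : D) (g : Hom (U a) (U b)), hZ b ∘ g = hZ a -> exists g', Uh _ _ g' = g;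
  lift_obj : forall (x : E) (h : Hom x Z), sigma_special (@Sigma) h ->
     exists (a : D) (i : Hom x (U a)) (j : Hom (U a) x),
       j ∘ i = idm x /\ i ∘ j = idm (U a) /\ hZ a ∘ i = h }.

Lemma pb_transport {a b c p p' : E} (f : Hom a c) (g : Hom b c) (p1 : Hom p a) (p2 : Hom p b)
  (j : Hom p' p) (i : Hom p p') :
  is_pullback f g p1 p2 -> j ∘ i = idm p -> i ∘ j = idm p' ->
  is_pullback f g (p1 ∘ j) (p2 ∘ j).
Proof.
  intros H Hji Hij. split.
  - rewrite !comp_assoc, (pb_comm H). reflexivity.
  - intros q q1 q2 Hq. destruct (pb_ex H q q1 q2 Hq) as [u [Hu1 Hu2]].
    exists (i ∘ u). split; [|split].
    + rewrite <- comp_assoc, (comp_assoc j i), Hji, comp_id_l. exact Hu1.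
    + rewrite <- comp_assoc, (comp_assoc j i), Hji, comp_id_l. exact Hu2.
    + intros u' H1 H2.
      assert (j ∘ u' = u).
      { apply (pb_uniq H); rewrite ?comp_assoc; [rewrite H1, Hu1 | rewrite H2, Hu2]; reflexivity. }
      rewrite <- H0, comp_assoc, Hij, comp_id_l. reflexivity.
Qed.

Variables (D : Category) (Z : E) (F : Forget D Z).
Arguments Uh [D Z] f0 {a b} _.
Arguments Uh_comp [D Z] f0 {a b c} g f.
Arguments Uh_id [D Z] f0 a.
Arguments Uh_inj [D Z] f0 {a b} f g _.
Arguments Uh_hZ [D Z] f0 {a b} g.
Arguments lift_hom [D Z] f0 {a b} g _.
Arguments lift_obj [D Z] f0 {x} h _.

Lemma D_pb (X Y Yb : D) (f : Hom X Y) (yy : Hom Yb Y) :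
  exists (a : D) (xx : Hom a X) (fb : Hom a Yb),
    is_pullback f yy xx fb /\ is_pullback (Uh F f) (Uh F yy) (Uh F xx) (Uh F fb).
Proof.
  destruct (HP _ _ _ (Uh F f) (Uh F yy)) as [P [px [pf HE]]].
  assert (SP : sigma_special (@Sigma) (hZ F X ∘ px)).
  { exact (LP HP Hpt (hZ_spec F X) (hZ_spec F Yb) (hZ_spec F Y) (Uh_hZ F f) (Uh_hZ F yy) HE eq_refl). }
  destruct (lift_obj F _ SP) as [a [i [j [Hji [Hij Hi]]]]].
  assert (Ha : hZ F a = hZ F X ∘ px ∘ j).
  { rewrite <- Hi, <- comp_assoc, Hij, comp_id_r. reflexivity. }
  assert (L1 : hZ F X ∘ (px ∘ j) = hZ F a) by (rewrite comp_assoc, Ha; reflexivity).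
  destruct (lift_hom F _ L1) as [xx Hxx].
  assert (L2 : hZ F Yb ∘ (pf ∘ j) = hZ F a).
  { rewrite comp_assoc, Ha, <- (Uh_hZ F yy), <- (comp_assoc (hZ F Y)), <- (pb_comm HE),
      (comp_assoc (hZ F Y)), (Uh_hZ F f). reflexivity. }
  destruct (lift_hom F _ L2) as [fb Hfb].
  assert (HE' : is_pullback (Uh F f) (Uh F yy) (Uh F xx) (Uh F fb)).
  { rewrite Hxx, Hfb. apply pb_transport with (i := i); auto. }
  exists a, xx, fb. split; [|exact HE'].
  split.
  - apply (Uh_inj F). rewrite !(Uh_comp F). exact (pb_comm HE').
  - intros q q1 q2 Hq.
    assert (Hq' : Uh F f ∘ Uh F q1 = Uh F yy ∘ Uh F q2) by (rewrite <- !(Uh_comp F), Hq; reflexivity).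
    destruct (pb_ex HE' _ _ _ Hq') as [u [Hu1 Hu2]].
    assert (L3 : hZ F a ∘ u = hZ F q).
    { rewrite <- (Uh_hZ F xx), <- comp_assoc, Hu1. apply (Uh_hZ F). }
    destruct (lift_hom F _ L3) as [u' Hu'].
    exists u'. split; [|split].
    + apply (Uh_inj F). rewrite (Uh_comp F), Hu'. exact Hu1.
    + apply (Uh_inj F). rewrite (Uh_comp F), Hu'. exact Hu2.
    + intros v H1 H2. apply (Uh_inj F). rewrite Hu'.
      apply (pb_uniq HE'); rewrite <- (Uh_comp F); [rewrite H1, Hu1 | rewrite H2, Hu2]; reflexivity.
Qed.


Lemma D_pbE (X Y Yb p : D) (f : Hom X Y) (yy : Hom Yb Y) (xx : Hom p X) (fb : Hom p Yb) :
  is_pullback f yy xx fb -> is_pullback (Uh F f) (Uh F yy) (Uh F xx) (Uh F fb).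
Proof.
  intros Hp. destruct (D_pb _ _ _ f yy) as [a [xa [fa [HD HE]]]].
  destruct (pb_ex HD _ _ _ (pb_comm Hp)) as [phi [Hphi1 Hphi2]].
  destruct (pb_ex Hp _ _ _ (pb_comm HD)) as [psi [Hpsi1 Hpsi2]].
  assert (E1 : psi ∘ phi = idm p).
  { apply (pb_uniq Hp); rewrite comp_assoc, comp_id_r;
      [rewrite Hpsi1, Hphi1 | rewrite Hpsi2, Hphi2]; reflexivity. }
  assert (E2 : phi ∘ psi = idm a).
  { apply (pb_uniq HD); rewrite comp_assoc, comp_id_r;
      [rewrite Hphi1, Hpsi1 | rewrite Hphi2, Hpsi2]; reflexivity. }
  rewrite <- Hphi1, <- Hphi2, !(Uh_comp F).
  apply pb_transport with (i := Uh F psi); [exact HE| |];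
    rewrite <- (Uh_comp F), ?E1, ?E2; apply (Uh_id F).
Qed.

Lemma mono_reflect (M X : D) (i : Hom M X) : is_mono i -> is_mono (Uh F i).
Proof.
  intros Hm T u v Huv.
  destruct (HP _ _ _ (Uh F i) (Uh F i)) as [K [d0 [d1 HK]]].
  assert (SK : sigma_special (@Sigma) (hZ F M ∘ d0)).
  { exact (LP HP Hpt (hZ_spec F M) (hZ_spec F M) (hZ_spec F X) (Uh_hZ F i) (Uh_hZ F i) HK eq_refl). }
  destruct (lift_obj F _ SK) as [a [io [j [Hji [Hij Hi]]]]].
  assert (Ha : hZ F a = hZ F M ∘ d0 ∘ j).
  { rewrite <- Hi, <- comp_assoc, Hij, comp_id_r. reflexivity. }
  assert (L0 : hZ F M ∘ (d0 ∘ j) = hZ F a) by (rewrite comp_assoc, Ha; reflexivity).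
  assert (L1 : hZ F M ∘ (d1 ∘ j) = hZ F a).
  { rewrite Ha, <- (Uh_hZ F i), <- !comp_assoc, (comp_assoc (Uh F i) d1), <- (pb_comm HK), <- comp_assoc. reflexivity. }
  destruct (lift_hom F _ L0) as [e0 He0].
  destruct (lift_hom F _ L1) as [e1 He1].
  assert (Hee : e0 = e1).
  { apply Hm, (Uh_inj F). rewrite !(Uh_comp F), He0, He1, !comp_assoc, (pb_comm HK). reflexivity. }
  assert (Hd : d0 = d1).
  { rewrite <- (comp_id_r d0), <- (comp_id_r d1), <- Hji, !comp_assoc, <- He0, <- He1, Hee.
    reflexivity. }
  destruct (pb_ex HK _ _ _ Huv) as [w [Hw0 Hw1]].
  rewrite <- Hw0, <- Hw1, Hd. reflexivity.
Qed.

Theorem D_protomodular : protomodular D.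
Proof.
  split.
  - intros x y f s yb yy Hfs. destruct (D_pb _ _ _ f yy) as [a [xx [fb [H _]]]]. eauto.
  - intros x y f s Hfs yb yy p xx fb Hpb m i u' v' Hmono Hiu Hiv.
    pose proof (D_pbE Hpb) as HE.
    assert (Hfs' : Uh F f ∘ Uh F s = idm (U F y)) by (rewrite <- (Uh_comp F), Hfs; apply (Uh_id F)).
    pose proof (LA HP Hfib Hpt _ _ (hZ_spec F x) (hZ_spec F y) Hfs' (Uh_hZ F f)) as SigF.
    assert (JE : jointly_extremally_epic (Uh F xx) (Uh F s)) by exact (Hpm SigF HE).
    destruct (JE _ (Uh F i) (Uh F u') (Uh F v') (mono_reflect Hmono))
      as [g [Hg1 Hg2]].
    + rewrite <- (Uh_comp F), Hiu. reflexivity.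
    + rewrite <- (Uh_comp F), Hiv. reflexivity.
    + assert (Lg : hZ F m ∘ g = hZ F x).
      { rewrite <- (Uh_hZ F i), <- comp_assoc, Hg2. apply comp_id_r. }
      destruct (lift_hom F _ Lg) as [g' Hg'].
      exists g'. split; apply (Uh_inj F); rewrite (Uh_comp F), (Uh_id F), Hg'; assumption.
Qed.

End Abstract.

Definition slice_forget (E : Category) (Sigma : SplitClass E) (Z : E) :
  @Forget E Sigma (SigmaSpecialSlice Sigma Z) Z.
Proof.
  unshelve refine (@Build_Forget E Sigma (SigmaSpecialSlice Sigma Z) Z
    (fun a => projT1 (proj1_sig a)) (fun a => projT2 (proj1_sig a))
    (fun a b g => proj1_sig g) _ _ _ _ _ _ _).
  - intros; reflexivity.
  - intros; reflexivity.
  - intros a b f g H. apply SHom_eq. exact H.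
  - intros a b g. exact (proj2_sig g).
  - intros a. exact (proj2_sig a).
  - intros a b g H. exists (exist _ g H). reflexivity.
  - intros x h Hs. exists (exist _ (existT _ x h) Hs), (idm x), (idm x).
    simpl. rewrite comp_id_l. auto using comp_id_r.
Defined.

Lemma term_eq {C : Category} (t : C) : is_terminal t -> forall x (u v : Hom x t), u = v.
Proof. intros Ht x u v. destruct (Ht x) as [f Hf]. rewrite (Hf u), (Hf v). reflexivity. Qed.

Lemma pb_term {C : Category} (t t' x r : C) (h : Hom x t) (f : Hom x t') (d0 d1 : Hom r x) :
  is_terminal t -> is_terminal t' -> is_pullback f f d0 d1 -> is_pullback h h d0 d1.
Proof.
  intros Ht Ht' [_ H]. split.
  - apply (term_eq Ht).
  - intros q q1 q2 _. apply H. apply (term_eq Ht').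
Qed.

Definition term_map {C : Category} (t : C) (Ht : is_terminal t) (x : C) : Hom x t :=
  proj1_sig (constructive_indefinite_description _ (Ht x)).

Definition obj_forget (E : Category) (Sigma : SplitClass E) (t : E) (Ht : is_terminal t) :
  @Forget E Sigma (SigmaSpecialObjects Sigma) t.
Proof.
  unshelve refine (@Build_Forget E Sigma (SigmaSpecialObjects Sigma) t
    (fun a => proj1_sig a) (fun a => term_map Ht (proj1_sig a))
    (fun a b g => g) _ _ _ _ _ _ _).
  - intros; reflexivity.
  - intros; reflexivity.
  - intros a b f g H. exact H.
  - intros a b g. apply (term_eq Ht).
  - intros a. exact (proj2_sig a t Ht _).
  - intros a b g H. exists g. reflexivity.
  - intros x h Hs.
    assert (Ho : sigma_special_object Sigma x).
    { intros t' Ht' f' r d0 d1 s0 Hr H0 H1. exact (Hs r d0 d1 s0 (pb_term h Ht Ht' Hr) H0 H1). }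
    exists (exist _ x Ho), (idm x), (idm x).
    split; [apply comp_id_l|split; [apply comp_id_l|apply (term_eq Ht)]].
Defined.

Theorem proposition8p6 (E : Category) (Sigma : SplitClass E) :
  finitely_complete E ->
  split_epi_class Sigma ->
  point_congruous Sigma ->
  sigma_protomodular Sigma ->
  (forall Z : E, protomodular (SigmaSpecialSlice Sigma Z)) /\
  protomodular (SigmaSpecialObjects Sigma).
Proof.
  intros [[t Ht] HPB] _ [Hfib [_ Hpt]] Hpm. split.
  - intros Z. exact (D_protomodular HPB Hfib Hpt Hpm (slice_forget Sigma Z)).
  - exact (D_protomodular HPB Hfib Hpt Hpm (obj_forget Sigma Ht)).
Qed.
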